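(* Let $N$ be a positive integer. Then there exist equal norm tight integer frames with: (1) $4N^2$ vectors in $\mathcal{H}_{N^2+1}$; (2) $4N^2$ vectors in $\mathcal{H}_{2N^2+1}$; (3) $4N^2$ vectors in $\mathcal{H}_{3N^2+1}$; (4) $8N^2$ vectors in $\mathcal{H}_{4N^2+1}$; (5) $8N^2$ vectors in $\mathcal{H}_{4N^2+2}$.
   Context: $\mathcal{H}_M$ is the real $M$-dimensional Hilbert space, identified with $\mathbb{R}^M$ via a fixed orthonormal basis. An equal norm tight integer frame (ENTIF) with $N$ elements in $\mathcal{H}_M$ is an $M\times N$ integer matrix $A$ of rank $M$ with $AA^T=\lambda I_M$ for some $\lambda>0$ and all columns of the same Euclidean norm. *)

(* Defs.v *)
From mathcomp Require Import all_boot all_order all_algebra.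
Set Implicit Arguments. Unset Strict Implicit. Unset Printing Implicit Defensive.
Import Order.TTheory GRing.Theory Num.Theory.
Local Open Scope ring_scope.

(* An equal norm tight integer frame (ENTIF) with N elements in H_M:
   an M x N integer matrix A of rank M (rank computed over the rationals,
   equivalently over the reals), with A A^T = lambda I_M for some lambda > 0
   (lambda real; necessarily an integer since A is integral), and all columns
   of the same Euclidean norm (equivalently the same squared norm). *)
Definition col_sqnorm (M N : nat) (A : 'M[int]_(M, N)) (j : 'I_N) : int :=
  \sum_(i < M) A i j ^+ 2.

Definition is_ENTIF (M N : nat) (A : 'M[int]_(M, N)) : Prop :=
  [/\ \rank (map_mx (fun z : int => z%:~R : rat) A) = M,
      exists2 lambda : int, 0 < lambda & A *m A^T = lambda%:M
    & forall j k : 'I_N, col_sqnorm A j = col_sqnorm A k].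

Definition exists_ENTIF (M N : nat) : Prop :=
  exists A : 'M[int]_(M, N), is_ENTIF A.

(* Main.v *)
Require Import Defs.
From mathcomp Require Import all_boot all_order all_algebra.
Set Implicit Arguments. Unset Strict Implicit. Unset Printing Implicit Defensive.
Import Order.TTheory GRing.Theory Num.Theory.
Local Open Scope ring_scope.


Definition h (r c : nat) : int :=
  if (odd r && odd c) (+) (odd (r %/ 2) && odd (c %/ 2)) (+) (odd (r %/ 4) && odd (c %/ 4))
  then -1 else 1.

Lemma hh r c : h r c * h r c = 1.
Proof. by rewrite /h; case: ifP. Qed.

Fixpoint sh r s n : int := if n is n'.+1 then sh r s n' + h r n' * h s n' else 0.

Lemma shE r s n : \sum_(0 <= c < n) h r c * h s c = sh r s n.
Proof. elim: n => [|n IH]; first by rewrite big_nil. by rewrite big_nat_recr //= IH. Qed.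

Lemma orth_all : all (fun r => all (fun s => sh r s 8 == if r == s then 8 else 0) (iota 0 8)) (iota 0 8)
  && all (fun r => all (fun s => sh r s 4 == if r == s then 4 else 0) (iota 0 4)) (iota 0 4).
Proof. by vm_compute. Qed.

Lemma orth n r s : (n == 4)%N || (n == 8)%N -> (r < n)%N -> (s < n)%N ->
  \sum_(0 <= c < n) h r c * h s c = if r == s then n%:Z else 0.
Proof.
rewrite shE; have /andP[H8 H4] := orth_all.
move=> /orP[/eqP->|/eqP->] hr hs.
- have := allP (allP H4 r _) s; rewrite !mem_iota /= => /(_ hr hs) /eqP.
  by case: (r == s).
- have := allP (allP H8 r _) s; rewrite !mem_iota /= => /(_ hr hs) /eqP.
  by case: (r == s).
Qed.

Lemma sum_blocks B n (f : nat -> int) :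
  \sum_(0 <= j < B * n) f j = \sum_(0 <= b < B) \sum_(0 <= c < n) f (b * n + c)%N.
Proof.
elim: B => [|B IH]; first by rewrite mul0n !big_nil.
rewrite mulSnr (big_cat_nat _ (n:=B*n)) //= ?leq_addr // IH big_nat_recr //=; congr (_ + _).
rewrite -{1}(add0n (B*n)%N) big_addn addKn; apply: eq_bigr => i _; by rewrite addnC.
Qed.

Lemma sum_pick B a (Y : nat -> int) :
  \sum_(0 <= b < B) (if a == b then Y b else 0) = if (a < B)%N then Y a else 0.
Proof.
elim: B => [|B IH]; first by rewrite big_nil.
rewrite big_nat_recr //= IH ltnS.
by case: (ltngtP a B) => [lt|gt|->]; rewrite ?addr0 ?add0r.
Qed.


Section C.
Variables (N n t g : nat).
Local Notation B := (N ^ 2)%N.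

Definition F (i j : nat) : int :=
  if (i < t * B)%N then (if (i %/ t == j %/ n)%N then N%:Z * h (i %% t + g)%N (j %% n)%N else 0)
  else h (i - t * B)%N (j %% n)%N.

Lemma Fblk i b c : (c < n)%N ->
  F i (b * n + c)%N = if (i < t * B)%N then (if (i %/ t == b)%N then N%:Z * h (i %% t + g)%N c else 0)
                    else h (i - t * B)%N c.
Proof.
move=> hc; have n0 : (0 < n)%N by apply: leq_ltn_trans hc.
by rewrite /F divnMDl // (divn_small hc) addn0 modnMDl (modn_small hc).
Qed.

Hypothesis hn : (n == 4)%N || (n == 8)%N.
Hypothesis htg : (t + g <= n)%N.

Lemma tight_nat i k : (i < t * B + g)%N -> (k < t * B + g)%N ->
  \sum_(0 <= j < B * n) F i j * F k j = if i == k then (B * n)%N%:Z else 0.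
Proof.
move=> hi0 hk0.
rewrite sum_blocks.
under eq_big_nat => b _ do
  (under eq_big_nat => c /andP[_ hc] do rewrite !Fblk //).
case: (ltnP i (t * B)) => hi; case: (ltnP k (t * B)) => hk.
- have t0 : (0 < t)%N by case: (t) hi => //; rewrite mul0n.
  have ri : (i %% t + g < n)%N by apply: leq_trans htg; rewrite ltn_add2r ltn_mod.
  have rk : (k %% t + g < n)%N by apply: leq_trans htg; rewrite ltn_add2r ltn_mod.
  rewrite (eq_big_nat _ _ (F2 := fun b => if (i %/ t == b)%N then
     (if (k %/ t == b)%N then N%:Z * N%:Z * (if (i %% t + g == k %% t + g)%N then n%:Z else 0) else 0) else 0)); last first.
    move=> b _; case: eqP => _; case: eqP => _ /=;
      [rewrite -(orth hn ri rk) mulr_sumr; apply: eq_bigr => c _; by rewrite mulrACA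
      |by rewrite big1 // => c _; rewrite ?mul0r ?mulr0..].
  rewrite (sum_pick _ _ (fun b => (if (k %/ t == b)%N then N%:Z * N%:Z * (if (i %% t + g == k %% t + g)%N then n%:Z else 0) else 0))) ltn_divLR // mulnC hi.
  have ei := divn_eq i t; have ek := divn_eq k t.
  case: eqP => hb; case: eqP => hr.
  + have -> : i == k by rewrite ei ek hb (addIn hr).
    rewrite -!PoszM; congr Posz; by rewrite mulnA mulnn.
  + case: eqP => [eik|_]; [by rewrite eik in hr|by rewrite ?mulr0].
  + by rewrite hr in hb.
  + by [].
- rewrite (ltn_eqF (leq_trans hi hk)).
  have t0 : (0 < t)%N by case: (t) hi => //; rewrite mul0n.
  have ri : (i %% t + g < n)%N by apply: leq_trans htg; rewrite ltn_add2r ltn_mod.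
  have rk : (k - t * B < g)%N by rewrite ltn_subLR // addnC.
  have rk' : (k - t * B < n)%N by apply: leq_trans htg; apply: leq_trans rk _; rewrite leq_addl.
  apply: big1 => b _; case: eqP => _; last by rewrite big1 // => c _; rewrite mul0r.
  under eq_bigr do rewrite -mulrA.
  rewrite -mulr_sumr orth // gtn_eqF ?mulr0 //.
  by apply: leq_trans rk _; rewrite leq_addl.
- rewrite (gtn_eqF (leq_trans hk hi)).
  have t0 : (0 < t)%N by case: (t) hk => //; rewrite mul0n.
  have rk : (k %% t + g < n)%N by apply: leq_trans htg; rewrite ltn_add2r ltn_mod.
  have ri : (i - t * B < g)%N by rewrite ltn_subLR // addnC.
  have ri' : (i - t * B < n)%N by apply: leq_trans htg; apply: leq_trans ri _; rewrite leq_addl.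
  apply: big1 => b _; case: eqP => _; last by rewrite big1 // => c _; rewrite mulr0.
  under eq_bigr do rewrite mulrCA.
  rewrite -mulr_sumr orth // ltn_eqF ?mulr0 //.
  by apply: leq_trans ri _; rewrite leq_addl.
- have ri : (i - t * B < n)%N.
    by apply: leq_trans htg; apply: leq_trans (_ : g <= _)%N; [rewrite ltn_subLR // addnC|rewrite leq_addl].
  have rk : (k - t * B < n)%N.
    by apply: leq_trans htg; apply: leq_trans (_ : g <= _)%N; [rewrite ltn_subLR // addnC|rewrite leq_addl].
  under eq_bigr do rewrite orth //.
  rewrite sumr_const_nat subn0.
  case: eqP => e.
  + have -> : i == k by rewrite -(subnK hi) -(subnK hk) e.
    by rewrite -mulr_natl natz PoszM.
  + rewrite mul0rn; case: eqP => // eik; by rewrite eik in e.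
Qed.

Lemma col_nat j : (j < B * n)%N ->
  \sum_(0 <= i < t * B + g) F i j ^+ 2 = (t * B + g)%N%:Z.
Proof.
move=> hj; have n0 : (0 < n)%N by case/orP: hn => /eqP->.
rewrite (big_cat_nat _ (n := (t * B)%N)) ?leq_addr //= PoszD.
have jB : (j %/ n < B)%N by rewrite ltn_divLR.
congr (_ + _).
  rewrite mulnC sum_blocks.
  rewrite (eq_big_nat _ _ (F2 := fun b => if (j %/ n == b)%N then (t * (N * N))%N%:Z else 0)); last first.
    move=> b /andP[_ hb].
    rewrite (eq_big_nat _ _ (F2 := fun r => if (j %/ n == b)%N then (N * N)%N%:Z else 0)); last first.
      move=> r /andP[_ hr].
      have t0 : (0 < t)%N by apply: leq_ltn_trans hr.
      have -> : F (b * t + r) j = if (b == j %/ n)%N then N%:Z * h (r + g) (j %% n) else 0.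
        rewrite /F divnMDl // (divn_small hr) addn0 modnMDl (modn_small hr).
        have -> : (b * t + r < t * B)%N.
          apply: leq_trans (_ : b.+1 * t <= _)%N; first by rewrite mulSnr ltn_add2l.
          by rewrite mulnC leq_mul2l hb orbT.
        done.
      rewrite eq_sym; case: eqP => _ //.
      by rewrite expr2 mulrACA hh mulr1 PoszM.
    rewrite sumr_const_nat subn0; case: eqP => _ //; last by rewrite mul0rn.
    by rewrite -mulr_natl natz -PoszM mulnC.
  rewrite (sum_pick _ _ (fun b => (t * (N * N))%N%:Z)) jB.
  by rewrite mulnn mulnC.
rewrite -{1}(add0n (t * B)%N) big_addn addKn.
rewrite (eq_big_nat _ _ (F2 := fun _ => 1)); first by rewrite sumr_const_nat subn0 natz.
move=> i _; rewrite /F ltnNge leq_addl /= addnK.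
by rewrite expr2 hh.
Qed.

Definition Amx : 'M[int]_(t * B + g, B * n) := \matrix_(i, j) F i j.

Lemma Amx_ENTIF : (0 < N)%N -> is_ENTIF Amx.
Proof.
move=> N0; have n0 : (0 < n)%N by case/orP: hn => /eqP->.
have hA : Amx *m Amx^T = ((B * n)%N%:Z)%:M.
  apply/matrixP => i k; rewrite !mxE.
  under eq_bigr do rewrite !mxE.
  rewrite -(big_mkord xpredT (fun j => F i j * F k j)) tight_nat //.
  by rewrite -(val_eqE i k); case: (_ == _); rewrite ?mulr1n ?mulr0n.
split.
- set f := (fun z : int => z%:~R : rat).
  have E : map_mx f Amx *m (map_mx f Amx)^T = (((B * n)%N%:Z)%:~R : rat)%:M.
    apply/matrixP => i k; rewrite !mxE.
    have -> : (((B * n)%N%:Z)%:~R : rat) *+ (i == k) = f ((((B * n)%N%:Z)%:M : 'M[int]_(t * B + g)) i k).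
      by rewrite /f mxE; case: (i == k); rewrite ?mulr1n ?mulr0n.
    rewrite -hA mxE /f rmorph_sum; apply: eq_bigr => j _; by rewrite !mxE rmorphM.
  apply/eqP; rewrite eqn_leq rank_leq_row /=.
  have l0 : (((B * n)%N%:Z)%:~R : rat) != 0.
    by rewrite intr_eq0 eqz_nat muln_eq0 negb_or -lt0n expn_gt0 N0 -lt0n n0.
  apply: (mulmx1_min_rank (M := 1%:M) (N := (map_mx f Amx)^T *m ((((B * n)%N%:Z)%:~R : rat)^-1)%:M)).
  by rewrite mul1mx mulmxA E -scalar_mxM mulfV.
- exists (B * n)%N%:Z => //.
  by rewrite ltz_nat muln_gt0 expn_gt0 N0 n0.
- move=> j k; rewrite /col_sqnorm.
  under eq_bigr do rewrite mxE.
  under [in RHS]eq_bigr do rewrite mxE.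
  rewrite -(big_mkord xpredT (fun i => F i j ^+ 2)) -(big_mkord xpredT (fun i => F i k ^+ 2)).
  by rewrite !col_nat.
Qed.

End C.

Lemma exE N M K n t g : (0 < N)%N -> (n == 4)%N || (n == 8)%N -> (t + g <= n)%N ->
  M = (t * N ^ 2 + g)%N -> K = (N ^ 2 * n)%N -> exists_ENTIF M K.
Proof. move=> N0 hn htg -> ->; exists (Amx N n t g); exact: Amx_ENTIF. Qed.

Local Close Scope ring_scope.

Theorem theorem6p10 (N : nat) : (0 < N)%N ->
  [/\ exists_ENTIF (N ^ 2).+1 (4 * N ^ 2),
      exists_ENTIF (2 * N ^ 2).+1 (4 * N ^ 2),
      exists_ENTIF (3 * N ^ 2).+1 (4 * N ^ 2),
      exists_ENTIF (4 * N ^ 2).+1 (8 * N ^ 2)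
    & exists_ENTIF (4 * N ^ 2).+2 (8 * N ^ 2)].
Proof.
move=> N0; split.
- by apply: (@exE N _ _ 4 1 1) => //; rewrite ?mul1n ?addn1 // mulnC.
- by apply: (@exE N _ _ 4 2 1) => //; rewrite ?addn1 // mulnC.
- by apply: (@exE N _ _ 4 3 1) => //; rewrite ?addn1 // mulnC.
- by apply: (@exE N _ _ 8 4 1) => //; rewrite ?addn1 // mulnC.
- by apply: (@exE N _ _ 8 4 2) => //; rewrite ?addn2 // mulnC.
Qed.
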